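(* Let $1\le d<n$, let $\underline i_{\max,n-1}:=(n-d)(n-d+1)\cdots(n-1)$ and $\underline i_{\max}:=(n-d+1)(n-d+2)\cdots n$, and let $M=\{\underline i\in I(d,n)\mid \ell(\underline i)=\ell(\underline i_{\max,n-1})\}$. Then: (i) $\underline i_{\max,n-1}\ge_{lex}\underline j$ for all $\underline j\in M$. (ii) The interval $\{\underline j\in I(d,n)\mid \underline i_{\max,n-1}\le_{lex}\underline j\le_{lex}\underline i_{\max}\}$ with respect to the lexicographic order equals the interval $[\underline i_{\max,n-1},\underline i_{\max}]$ with respect to the Bruhat order, it is totally ordered with respect to the Bruhat order, and its elements are exactly the rows $(n-d)(n-d+1)\cdots(n-d+k-1)(n-d+k+1)\cdots n$ for $k=0,1,\dots,d$ (obtained from $\underline i_{\max}$ by lowering its first $k$ entries by one), which are the first $d+1$ elements (from the top) of the leftmost maximal chain $\mathfrak C_{\mathrm{left}}$.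
   Context: $I(d,n)$ is the set of $d$-element subsets of $\{1,\dots,n\}$ written as increasing sequences $i_1\cdots i_d$; the Bruhat order is $\underline i\le\underline j$ iff $i_k\le j_k$ for all $k$; $\le_{lex}$ is the lexicographic order on such sequences; $\ell(\underline i)=\sum_h(i_h-h)$. $\mathfrak C_{\mathrm{left}}$ is the maximal chain of $I(d,n)$ which is largest in the lexicographic order on concatenated strings $\underline i_r\cdots\underline i_0$; it is obtained from $\underline i_{\max}$ by lowering successively the first, second, ..., $d$-th entry by one, then again the first, second, ..., and so on. *)

(* Defs.v *)
From mathcomp Require Import all_boot.
Set Implicit Arguments. Unset Strict Implicit. Unset Printing Implicit Defensive.

Definition inI (d n : nat) (s : seq nat) : bool :=
  [&& size s == d, sorted ltn s & all (fun x => 0 < x <= n) s].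

Definition bruhat (s t : seq nat) : bool := all2 leq s t.

Fixpoint lexle (s t : seq nat) : bool :=
  match s, t with
  | [::], _ => true
  | _ :: _, [::] => false
  | x :: s', y :: t' => (x < y) || ((x == y) && lexle s' t')
  end.

Definition ell (s : seq nat) : nat := \sum_(h < size s) (nth 0 s h - h.+1).

Definition imax (d n : nat) : seq nat := iota (n - d + 1) d.
Definition imaxn1 (d n : nat) : seq nat := iota (n - d) d.
Definition imin (d : nat) : seq nat := iota 1 d.

Definition row (d n k : nat) : seq nat := iota (n - d) k ++ iota (n - d + k + 1) (d - k).

Definition bcovers (d n : nat) (a b : seq nat) : Prop :=
  [/\ bruhat a b, a != b &
      forall x, inI d n x -> bruhat a x -> bruhat x b -> x = a \/ x = b].

Definition max_chain (d n : nat) (c : seq (seq nat)) : Prop :=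
  [/\ c <> [::], all (inI d n) c, head [::] c = imax d n, last [::] c = imin d &
      forall h, h.+1 < size c -> bcovers d n (nth [::] c h.+1) (nth [::] c h)].

Definition left_chain (d n : nat) (c : seq (seq nat)) : Prop :=
  max_chain d n c /\
  forall c', max_chain d n c' -> lexle (flatten c') (flatten c).

(* Main.v *)
Require Import Defs.
From mathcomp Require Import all_boot.
From mathcomp Require Import zify.
Set Implicit Arguments. Unset Strict Implicit. Unset Printing Implicit Defensive.

Lemma bruhatP s t : reflect (size s = size t /\ forall i, i < size s -> nth 0 s i <= nth 0 t i) (bruhat s t).
Proof.
apply: (iffP idP).
- elim: s t => [|x s IH] [|y t] //= /andP[Hxy /IH [Hs Hi]]; split; first by rewrite Hs.
  by case=> [|i] //= /Hi.
- elim: s t => [|x s IH] [|y t] [Hs Hi] //=.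
  rewrite /bruhat /=; have -> /= := Hi 0 erefl; apply: IH; split; first by case: Hs.
  by move=> i Hi'; apply: (Hi i.+1).
Qed.

Lemma sorted_incr s i j : sorted ltn s -> i <= j -> j < size s -> nth 0 s i + (j - i) <= nth 0 s j.
Proof.
move=> /(sortedP 0) Hs Hij; elim: j Hij => [|j IH] Hij Hj; first by have -> : i = 0 by [lia]; rewrite subnn addn0.
case: (ltnP i j.+1) => Hi; last by have -> : i = j.+1 by [lia]; rewrite subnn addn0.
have := IH (ltnSE Hi) (ltnW Hj); have := Hs j Hj; lia.
Qed.

Section Fixed.
Variables d n : nat.
Hypothesis hdn : d < n.

Lemma inI_facts s : inI d n s -> [/\ size s = d,
   (forall i j, i <= j -> j < d -> nth 0 s i + (j - i) <= nth 0 s j) &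
   (forall i, i < d -> i.+1 <= nth 0 s i /\ nth 0 s i <= n - d + i.+1)].
Proof.
case/and3P=> /eqP Hs Hso /all_nthP Ha.
have Hinc : forall i j, i <= j -> j < d -> nth 0 s i + (j - i) <= nth 0 s j.
  by move=> i j Hij Hj; apply: sorted_incr => //; rewrite Hs.
split=> // i Hi.
have := Ha 0 i; rewrite Hs => /(_ Hi) /andP[H1 H2].
have := Ha 0 0; rewrite Hs => /(_ (leq_ltn_trans (leq0n _) Hi)) /andP[H3 H4].
have := Ha 0 d.-1; rewrite Hs => /(_ ltac:(lia)) /andP[H5 H6].
have := Hinc 0 i (leq0n _) Hi; have := Hinc i d.-1 ltac:(lia) ltac:(lia). lia.
Qed.

Lemma size_row k : k <= d -> size (row d n k) = d.
Proof. move=> Hk; rewrite /row size_cat !size_iota; lia. Qed.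

Lemma nth_row k i : k <= d -> i < d -> nth 0 (row d n k) i = if i < k then n - d + i else n - d + i + 1.
Proof.
move=> Hk Hi; rewrite /row nth_cat size_iota; case: ifP => H.
  by rewrite nth_iota.
rewrite nth_iota; lia.
Qed.

Lemma row_inI k : k <= d -> inI d n (row d n k).
Proof.
move=> Hk; apply/and3P; split; first by rewrite size_row.
  apply/(sortedP 0) => i; rewrite size_row // => Hi.
  rewrite !nth_row //; try lia. case: ifP; case: ifP; lia.
apply/(all_nthP 0) => i; rewrite size_row // => Hi.
rewrite nth_row //; case: ifP; lia.
Qed.

Lemma row_eq s : inI d n s -> (forall h, h < d -> n - d + h <= nth 0 s h) ->
  exists2 k, k <= d & s = row d n k.
Proof.
move=> HI Hlow; case: (inI_facts HI) => Hs Hinc Hb.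
pose k := find (fun h => nth 0 s h != n - d + h) (iota 0 d).
have Hk : k <= d by rewrite -[X in _ <= X](size_iota 0 d) find_size.
exists k => //; apply: (eq_from_nth (x0 := 0)); first by rewrite size_row.
rewrite Hs => i Hi; rewrite nth_row //.
case: ifP => Hik.
  have := before_find 0 Hik; rewrite nth_iota //= add0n => /negbFE/eqP //.
have Hkd : k < d by lia.
have : has (fun h => nth 0 s h != n - d + h) (iota 0 d) by rewrite has_find size_iota.
move/(nth_find 0); rewrite -/k nth_iota // add0n => /eqP Hne.
have := Hlow k Hkd; have := Hb k Hkd; have := Hb i Hi; have := Hinc k i ltac:(lia) Hi; lia.
Qed.

End Fixed.

Lemma iota_pos a m : 0 < m -> iota a m = a :: iota a.+1 m.-1.
Proof. by case: m. Qed.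

Lemma lexle_refl s : lexle s s.
Proof. by elim: s => //= x s ->; rewrite eqxx orbT. Qed.

Lemma lexle_catl p s t : lexle (p ++ s) (p ++ t) = lexle s t.
Proof. by elim: p => //= x p ->; rewrite ltnn eqxx. Qed.

Lemma lexle_head x y s t : lexle (x :: s) (y :: t) -> x <= y.
Proof. by rewrite /= => /orP[/ltnW|/andP[/eqP -> _]]. Qed.

Lemma lexle_lt x y s t : x < y -> lexle (x :: s) (y :: t).
Proof. by rewrite /= => ->. Qed.

Lemma lexle_diff s t A B h : size s = size t -> h < size s ->
  (forall i, i < h -> nth 0 s i = nth 0 t i) -> nth 0 t h < nth 0 s h ->
  lexle (s ++ A) (t ++ B) = false.
Proof.
elim: s t h => [|x s IH] [|y t] h //= [Hs] Hh Heq Hlt.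
case: h Hh Heq Hlt => [|h] Hh Heq Hlt /=.
  by rewrite ltnNge (ltnW Hlt) /= (gtn_eqF Hlt).
have Exy : x = y by apply: (Heq 0).
rewrite Exy ltnn eqxx /=; exact: (IH t h Hs Hh (fun i Hi => Heq i.+1 Hi) Hlt).
Qed.

Section Fixed2.
Variables d n : nat.
Hypothesis hd1 : 1 <= d.
Hypothesis hdn : d < n.

Lemma row_d : row d n d = imaxn1 d n.
Proof. by rewrite /row subnn cats0. Qed.

Lemma row_0 : row d n 0 = imax d n.
Proof. by rewrite /row /= addn0 subn0. Qed.

Lemma nth_imaxn1 i : nth 0 (imaxn1 d n) i = if i < d then n - d + i else 0.
Proof. rewrite /imaxn1; case: ifP => H; first by rewrite nth_iota. by rewrite nth_default // size_iota leqNgt H. Qed.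

Lemma lexI s : inI d n s -> (lexle (imaxn1 d n) s && lexle s (imax d n)) <->
  (exists2 k, k <= d & s = row d n k).
Proof.
move=> HI; case: (inI_facts hdn HI) => Hs Hinc Hb; split.
- case/andP=> H1 _; apply: row_eq => // h Hh.
  move: Hs H1; rewrite /imaxn1; case: s HI Hinc Hb => [|x s'] HI Hinc Hb Hs; first by move: hd1; rewrite -Hs.
  case: d hd1 Hh Hinc Hs => // d' _ Hh Hinc Hs /lexle_head Hx.
  have := Hinc 0 h (leq0n _) Hh; rewrite /=; lia.
- case=> k Hk ->; apply/andP; split.
  + have -> : imaxn1 d n = iota (n - d) k ++ iota (n - d + k) (d - k).
      by rewrite /imaxn1 -iotaD subnKC.
    rewrite /row lexle_catl.
    case E: (d - k) => [|e]; first by rewrite lexle_refl.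
    by rewrite /=; apply: lexle_lt; lia.
  + rewrite -row_0; case: k Hk => [|k] Hk; first exact: lexle_refl.
    rewrite /row /= subn0 addn0; case: d hd1 Hk => // d' _ Hk /=; apply: lexle_lt; lia.
Qed.

Lemma bruI s : inI d n s -> (bruhat (imaxn1 d n) s && bruhat s (imax d n)) <->
  (exists2 k, k <= d & s = row d n k).
Proof.
move=> HI; case: (inI_facts hdn HI) => Hs Hinc Hb; split.
- case/andP=> /bruhatP [_ H1] _; apply: row_eq => // h Hh.
  have := H1 h; rewrite size_iota nth_imaxn1 Hh; exact.
- case=> k Hk ->; apply/andP; split; apply/bruhatP; rewrite ?size_row ?size_iota //; split=> // i Hi.
  + rewrite nth_imaxn1 Hi nth_row //; case: ifP; lia.
  + have E := nth_row hdn (leq0n d) Hi; rewrite row_0 in E; rewrite E ltn0 (nth_row hdn Hk Hi); case: ifP; lia.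
Qed.

Lemma row_bruhat k k' : k <= k' -> k' <= d -> bruhat (row d n k') (row d n k).
Proof.
move=> Hkk Hk; apply/bruhatP; rewrite !size_row //; last by lia. split=> // i Hi.
rewrite !nth_row //; try lia. case: ifP; case: ifP; lia.
Qed.

Lemma ell_size s : size s = d -> ell s = \sum_(h < d) (nth 0 s h - h.+1).
Proof. by rewrite /ell => ->. Qed.

Lemma ell_row_lt k : k < d -> ell (row d n d) < ell (row d n k).
Proof.
move=> Hk; rewrite !ell_size ?size_row //; last by lia.
rewrite (bigD1 (Ordinal Hk)) //= [X in _ < X](bigD1 (Ordinal Hk)) //=.
have : \sum_(i < d | i != Ordinal Hk) (nth 0 (row d n d) i - i.+1) <=
       \sum_(i < d | i != Ordinal Hk) (nth 0 (row d n k) i - i.+1).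
  apply: leq_sum => i _; rewrite !nth_row //; try lia. case: ifP; case: ifP; lia.
rewrite !nth_row //; try lia. rewrite Hk ltnn. set A := \sum_(i < d | _) (nth 0 (row d n d) i - i.+1). set B := \sum_(i < d | _) (nth 0 (row d n k) i - i.+1). clearbody A B. lia.
Qed.

Lemma part1 j : inI d n j -> ell j = ell (imaxn1 d n) -> lexle j (imaxn1 d n).
Proof.
move=> HI Hell; case: (inI_facts hdn HI) => Hs Hinc Hb.
case: (ltnP (nth 0 j 0) (n - d)) => H0.
  rewrite /imaxn1; case: j HI Hell Hs Hinc Hb H0 => [|x j'] HI Hell Hs Hinc Hb H0; first by move: hd1; rewrite -Hs.
  rewrite (iota_pos _ hd1); exact: lexle_lt.
have [k Hk Ej] : exists2 k, k <= d & j = row d n k.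
  apply: row_eq => // h Hh; have := Hinc 0 h (leq0n _) Hh; lia.
case: (ltnP k d) => Hkd.
  by have := ell_row_lt Hkd; rewrite -Ej Hell row_d ltnn.
have -> : j = imaxn1 d n by rewrite Ej -row_d; congr row; lia.
exact: lexle_refl.
Qed.

End Fixed2.

Definition lower (h : nat) (x : seq nat) : seq nat := set_nth 0 x h (nth 0 x h).-1.
Definition lowerable (h : nat) (x : seq nat) : bool :=
  (h < size x) && ((if h is h'.+1 then nth 0 x h' else 0).+1 < nth 0 x h).

Fixpoint desc (f : nat) (x : seq nat) : seq (seq nat) :=
  x :: match f with
       | 0 => [::]
       | f'.+1 => if has (lowerable^~ x) (iota 0 (size x))
                  then desc f' (lower (find (lowerable^~ x) (iota 0 (size x))) x)
                  else [::]
       end.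

Lemma nth_lower h x i : nth 0 (lower h x) i = if i == h then (nth 0 x h).-1 else nth 0 x i.
Proof. by rewrite /lower nth_set_nth /=; case: eqP => // ->. Qed.

Lemma size_lower h x : h < size x -> size (lower h x) = size x.
Proof. by rewrite /lower size_set_nth => H; apply/maxn_idPr. Qed.

Lemma lowerableP h x : lowerable h x ->
  [/\ h < size x, 1 < nth 0 x h & forall i, h = i.+1 -> (nth 0 x i).+1 < nth 0 x h].
Proof.
case/andP=> Hh; case: h Hh => [|h] Hh H.
  by split=> // i.
split=> //; first lia.
by move=> i [<-].
Qed.

Lemma sumn_lower h x : h < size x -> 0 < nth 0 x h -> sumn (lower h x) + 1 = sumn x.
Proof.
rewrite /lower; elim: x h => [|a x IH] [|h] //= Hh Hp.
  lia.
have := IH h Hh Hp; lia.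
Qed.

Lemma nth_le_sumn x h : nth 0 x h <= sumn x.
Proof. elim: x h => [|a x IH] [|h] //=; [lia | have := IH h; lia]. Qed.

Lemma desc_head f x : nth [::] (desc f x) 0 = x.
Proof. by case: f. Qed.

Section Chain.
Variables d n : nat.
Hypothesis hd1 : 1 <= d.
Hypothesis hdn : d < n.

Lemma lower_cover h x : inI d n x -> lowerable h x ->
  inI d n (lower h x) /\ bcovers d n (lower h x) x.
Proof.
move=> HI /lowerableP [Hh H1 Hp]; case: (inI_facts hdn HI) => Hs Hinc Hb.
have Hsy : size (lower h x) = d by rewrite size_lower // Hs.
have Hle : forall i, nth 0 (lower h x) i <= nth 0 x i.
  by move=> i; rewrite nth_lower; case: eqP => [->|]; lia.
split.
  apply/and3P; split; first by rewrite Hsy.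
    apply/(sortedP 0) => i; rewrite Hsy => Hi; rewrite !nth_lower.
    have Hx := Hinc i i.+1 (leqnSn _) Hi.
    case: (i =P h) => [E|NE]; case: (i.+1 =P h) => [E'|NE'].
    + lia.
    + subst h; lia.
    + have := Hp i (esym E'); lia.
    + lia.
  apply/(all_nthP 0) => i; rewrite Hsy => Hi; rewrite nth_lower.
  have := Hb i Hi; case: eqP => [E|]; last lia.
  subst i; lia.
have Hne : lower h x != x.
  apply/eqP => E; have := congr1 (nth 0 ^~ h) E; rewrite /= nth_lower eqxx; lia.
split=> //.
  by apply/bruhatP; rewrite Hsy Hs; split=> // i _; apply: Hle.
move=> z HIz /bruhatP [Hs1 Hz1] /bruhatP [Hs2 Hz2].
case: (inI_facts hdn HIz) => Hsz _ _.
have Hoth : forall i, i != h -> nth 0 z i = nth 0 x i.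
  move=> i /negbTE Hih; case: (ltnP i d) => Hi.
    have := Hz1 i; have := Hz2 i; rewrite Hsy Hsz nth_lower Hih => /(_ Hi) A /(_ Hi); lia.
  by rewrite !nth_default // ?Hs ?Hsz.
have := Hz1 h; have := Hz2 h; rewrite Hsy Hsz -Hs nth_lower eqxx => /(_ Hh) A /(_ Hh) B.
case: (nth 0 z h =P nth 0 x h) => E.
  right; apply: (eq_from_nth (x0 := 0)); first by rewrite Hsz Hs.
  by move=> i _; case: (i =P h) => [->|/eqP]; [exact: E | apply: Hoth].
left; apply: (eq_from_nth (x0 := 0)); first by rewrite Hsz Hsy.
move=> i _; rewrite nth_lower; case: (i =P h) => [->|/eqP]; [lia | apply: Hoth].
Qed.

Lemma NL x : inI d n x -> (forall h, h < d -> ~~ lowerable h x) -> x = imin d.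
Proof.
move=> HI Hn; case: (inI_facts hdn HI) => Hs Hinc Hb.
apply: (eq_from_nth (x0 := 0)); first by rewrite Hs size_iota.
rewrite Hs => i Hi; rewrite nth_iota // add1n.
elim: i Hi => [|i IH] Hi.
  have := Hn 0 Hi; rewrite /lowerable Hs Hi /=; have := Hb 0 Hi; lia.
have := Hn i.+1 Hi; rewrite /lowerable Hs Hi /=.
have := IH (ltnW Hi); have := Hinc i i.+1 (leqnSn _) Hi; lia.
Qed.

Lemma find_lowerable x (Hhas : has (lowerable^~ x) (iota 0 (size x))) :
  lowerable (find (lowerable^~ x) (iota 0 (size x))) x.
Proof.
have := nth_find 0 Hhas; have : find (lowerable^~ x) (iota 0 (size x)) < size x.
  by rewrite -[X in _ < X](size_iota 0) -has_find.
by move=> H; rewrite nth_iota.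
Qed.

Lemma desc_ok f x : inI d n x -> all (inI d n) (desc f x) /\
  forall h, h.+1 < size (desc f x) -> bcovers d n (nth [::] (desc f x) h.+1) (nth [::] (desc f x) h).
Proof.
elim: f x => [|f IH] x HI; first by split=> [|[|h]] //=; rewrite HI.
rewrite /=; case: ifP => Hhas; last by split=> [|[|h]] //=; rewrite HI.
have [HIy Hcy] := lower_cover HI (find_lowerable Hhas).
have [Ha Hc] := IH _ HIy.
split; first by rewrite /= HI.
case=> [|h] Hh; first by rewrite /= desc_head.
exact: Hc.
Qed.

Lemma desc_last f x y : inI d n x -> sumn x <= f -> last y (desc f x) = imin d.
Proof.
elim: f x y => [|f IH] x y HI Hf.
  rewrite /=; apply: NL => // h Hh; apply/negP => /lowerableP [_ H _].
  have := nth_le_sumn x h; lia.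
rewrite /=; case: ifP => Hhas; last first.
  apply: NL => // h Hh; move/hasPn: Hhas; apply; rewrite mem_iota.
  by case: (inI_facts hdn HI) => ->; lia.
have Hl := find_lowerable Hhas; have [HIy _] := lower_cover HI Hl.
apply: IH => //; case/lowerableP: Hl => Hh H1 _.
have := sumn_lower Hh (ltnW H1); lia.
Qed.

Lemma row_lower k : k < d -> lower k (row d n k) = row d n k.+1 /\ lowerable k (row d n k).
Proof.
move=> Hk; split.
  apply: (eq_from_nth (x0 := 0)); first by rewrite size_lower ?size_row //; lia.
  rewrite size_lower ?size_row //; try lia. move=> i Hi.
  rewrite nth_lower !nth_row //; try lia. case: (i =P k) => [->|]; rewrite ?ltnn ?ltnSn //; try lia.
  case: ifP; case: ifP; lia.
rewrite /lowerable size_row; try lia. rewrite Hk /=.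
case: k Hk => [|k] Hk; rewrite !nth_row //; try lia. all: rewrite ?ltnn ?ltnSn; try lia.
Qed.

Definition Cl := map (row d n) (iota 0 d) ++ desc (sumn (row d n d)) (row d n d).

Lemma nth_Cl i : i <= d -> nth [::] Cl i = row d n i.
Proof.
move=> Hi; rewrite /Cl nth_cat size_map size_iota; case: ifP => H.
  by rewrite (nth_map 0) ?size_iota // nth_iota.
have -> : i - d = 0 by lia.
by rewrite desc_head; congr row; lia.
Qed.

Lemma size_Cl : d < size Cl.
Proof. rewrite /Cl size_cat size_map size_iota; case: (sumn _) => /= *; lia. Qed.

Lemma max_Cl : max_chain d n Cl.
Proof.
have HId := row_inI hdn (leqnn d).
have [Hda Hdc] := desc_ok (sumn (row d n d)) HId.
split.
- by move=> E; have := size_Cl; rewrite E.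
- rewrite /Cl all_cat Hda andbT; apply/allP => r /mapP [k]; rewrite mem_iota => /andP [_ Hk] ->.
  by apply: row_inI; lia.
- by rewrite -nth0 nth_Cl // row_0.
- by rewrite /Cl last_cat; apply: desc_last.
- move=> h Hh; case: (ltnP h d) => Hhd.
    rewrite !nth_Cl //; try lia. have [<- Hl] := row_lower Hhd.
    by case: (lower_cover (row_inI hdn (ltnW Hhd)) Hl).
  move: Hh; rewrite /Cl size_cat size_map size_iota => Hh.
  rewrite !nth_cat size_map size_iota.
  have -> : (h < d) = false by lia.
  have -> : (h.+1 < d) = false by lia.
  have -> : h.+1 - d = (h - d).+1 by lia.
  apply: Hdc; lia.
Qed.

End Chain.

Lemma GF m (P : pred nat) : (exists i, i < m /\ P i) ->
  exists h, [/\ h < m, P h & forall i, i < h -> ~~ P i].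
Proof.
move=> Hex.
have Hex' : exists i, (fun i => (i < m) && P i) i by case: Hex => i [H1 H2]; exists i; rewrite H1.
case: (ex_minnP Hex') => h /andP [Hh HP] Hmin; exists h; split=> // i Hi.
apply/negP => HPi; have := Hmin i; rewrite HPi (ltn_trans Hi Hh) => /(_ erefl); lia.
Qed.

Section Main.
Variables d n : nat.
Hypothesis hd1 : 1 <= d.
Hypothesis hdn : d < n.

Lemma keyL z k : inI d n z -> bruhat z (row d n k) -> z != row d n k -> k < d ->
  z = row d n k.+1 \/ exists h, [/\ h < d, forall i, i < h -> nth 0 z i = nth 0 (row d n k.+1) i
                                  & nth 0 z h < nth 0 (row d n k.+1) h].
Proof.
move=> HI /bruhatP [_ Hz] Hne Hk; case: (inI_facts hdn HI) => Hs Hinc Hb.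
rewrite Hs in Hz.
have Hzk := Hz k Hk; rewrite nth_row // ?ltnn in Hzk; last by lia.
case: (leqP (nth 0 z k) (n - d + k)) => Hk1.
  have Hler : forall i, i < d -> nth 0 z i <= nth 0 (row d n k.+1) i.
    move=> i Hi; have := Hz i Hi; rewrite !nth_row //; try lia.
    case: ifP; case: ifP; try lia. move=> H1 H2; have -> : i = k by lia. lia.
  case: (z =P row d n k.+1) => Ez; [by left | right].
  have Hex : exists i, i < d /\ (nth 0 z i != nth 0 (row d n k.+1) i).
    case Hh: (has (fun i => nth 0 z i != nth 0 (row d n k.+1) i) (iota 0 d)).
      by move/hasP: Hh => [i]; rewrite mem_iota => /andP[_ Hi] Hne'; exists i.
    exfalso; apply: Ez; apply: (eq_from_nth (x0 := 0)); first by rewrite size_row.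
    rewrite Hs => i Hi; move/hasPn: Hh => /(_ i); rewrite mem_iota Hi => /(_ erefl).
    by move/negbNE/eqP.
  case: (GF Hex) => h [Hh Hne' Hmin]; exists h; split=> //.
    by move=> i Hi; have := Hmin i Hi; move/negbNE/eqP.
  have := Hler h Hh; move: Hne'; lia.
have Hup : forall i, k <= i -> i < d -> nth 0 z i = n - d + i + 1.
  move=> i Hki Hi; have := Hinc k i Hki Hi; have := Hb i Hi; lia.
have Hex : exists i, i < d /\ ((i < k) && (nth 0 z i != n - d + i)).
  case Hh: (has (fun i => (i < k) && (nth 0 z i != n - d + i)) (iota 0 d)).
    by move/hasP: Hh => [i]; rewrite mem_iota => /andP[_ Hi] Hne'; exists i.
  exfalso; move/eqP: Hne; apply; apply: (eq_from_nth (x0 := 0)); first by rewrite size_row; lia.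
  rewrite Hs => i Hi; rewrite nth_row //; try lia. case: ifP => Hik.
    move/hasPn: Hh => /(_ i); rewrite mem_iota Hi Hik => /(_ erefl).
    by move/negbNE/eqP.
  apply: Hup => //; lia.
case: (GF Hex) => h [Hh /andP [Hhk Hne'] Hmin]; right; exists h; split=> //.
  move=> i Hi; have := Hmin i Hi; rewrite nth_row //; try lia.
  have Hik : i < k by lia.
  by rewrite Hik /= ltnS (ltnW Hik) => /negbNE/eqP.
have := Hz h Hh; rewrite !nth_row //; try lia. rewrite Hhk ltnS (ltnW Hhk). move: Hne'; lia.
Qed.
End Main.

Section Final.
Variables d n : nat.
Hypothesis hd1 : 1 <= d.
Hypothesis hdn : d < n.

Lemma part5 c : left_chain d n c -> forall k, k <= d -> nth [::] c k = row d n k.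
Proof.
case=> [[Hne Hall Hhead Hlast Hcov] Hlex].
suff H : forall k, k <= d -> k < size c /\ forall i, i <= k -> nth [::] c i = row d n i.
  by move=> k Hk; case: (H k Hk) => _; apply.
elim=> [|k IH] Hk.
  split; first by case: c Hne {Hhead Hlast Hall Hcov Hlex}.
  by move=> i; rewrite leqn0 => /eqP ->; rewrite nth0 Hhead row_0.
have [Hsz Hrows] := IH (ltnW Hk).
have Hkd : k < d := Hk.
have Hsz' : k.+1 < size c.
  rewrite ltn_neqAle Hsz andbT; apply/eqP => E.
  move: Hlast; rewrite -nth_last -E /= Hrows //.
  move/(congr1 (nth 0 ^~ d.-1)); rewrite /= nth_row //; try lia.
  rewrite /imin nth_iota; try lia. case: ifP; lia.
set z := nth [::] c k.+1.
have HIz : inI d n z by move/(all_nthP [::]): Hall; apply.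
have [Hbr Hne' _] := Hcov k Hsz'.
rewrite (Hrows k (leqnn k)) in Hbr Hne'.
split=> //.
case: (keyL hd1 hdn HIz Hbr Hne' Hkd) => [Ez | [h [Hh Heq Hlt]]].
  move=> i; rewrite leq_eqVlt => /orP [/eqP -> // | Hi]; exact: Hrows.
exfalso.
have := Hlex _ (max_Cl hd1 hdn).
have HszC : k.+1 < size (Cl d n) by have := size_Cl hd1 hdn; lia.
have Htake : take k.+1 (Cl d n) = take k.+1 c.
  apply: (eq_from_nth (x0 := [::])); first by rewrite !size_take HszC Hsz'.
  move=> i; rewrite size_take HszC => Hi; rewrite !nth_take // nth_Cl //; try lia.
  by rewrite Hrows.
rewrite -(cat_take_drop k.+1 (Cl d n)) -(cat_take_drop k.+1 c) !flatten_cat Htake lexle_catl.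
rewrite (drop_nth [::] HszC) (drop_nth [::] Hsz') /= nth_Cl // -/z.
have [Hsz1 _ _] := inI_facts hdn HIz.
rewrite (@lexle_diff (row d n k.+1) z _ _ h) //; rewrite ?size_row ?Hsz1 //; try lia.
by move=> i Hi; rewrite Heq.
Qed.

End Final.

Theorem lemma2p7 (d n : nat) (hd1 : 1 <= d) (hdn : d < n) :
  (* (i) *)
  (forall j, inI d n j -> ell j = ell (imaxn1 d n) -> lexle j (imaxn1 d n)) /\
  (* (ii) lex interval = Bruhat interval *)
  (forall j, inI d n j ->
     (lexle (imaxn1 d n) j && lexle j (imax d n)) =
     (bruhat (imaxn1 d n) j && bruhat j (imax d n))) /\
  (* totally ordered for Bruhat *)
  (forall j j', inI d n j -> inI d n j' ->
     lexle (imaxn1 d n) j && lexle j (imax d n) ->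
     lexle (imaxn1 d n) j' && lexle j' (imax d n) ->
     bruhat j j' || bruhat j' j) /\
  (* its elements are exactly the rows k = 0..d *)
  (forall j, inI d n j ->
     (lexle (imaxn1 d n) j && lexle j (imax d n)) <->
     (exists2 k, k <= d & j = row d n k)) /\
  (* which are the first d+1 elements of C_left *)
  (forall c, left_chain d n c -> forall k, k <= d -> nth [::] c k = row d n k).
Proof.
split; first exact: part1.
split.
  move=> j HI; apply/idP/idP => H.
    by apply/(bruI hd1 hdn HI); apply/(lexI hd1 hdn HI).
  by apply/(lexI hd1 hdn HI); apply/(bruI hd1 hdn HI).
split.
  move=> j j' HI HI' /(lexI hd1 hdn HI) [k Hk ->] /(lexI hd1 hdn HI') [k' Hk' ->].
  case: (leqP k k') => H.
    by rewrite (row_bruhat hd1 hdn H Hk') orbT.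
  by rewrite (row_bruhat hd1 hdn (ltnW H) Hk).
split; first by move=> j HI; apply: lexI.
exact: part5.
Qed.
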